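(* Let $n\ge 4$ and let $T$ be a vertex of the Whitehouse complex $\Delta_n$. Then $\mathrm{link}_{\Delta_n}(\{T\})\cong \Delta_{|T|+1} * \Delta_{n-|T|+1}$ as simplicial complexes.
   Context: The Whitehouse complex $\Delta_n$ ($n\ge 3$) is the simplicial complex with vertex set $V_n=\{S\subseteq\{2,\dots,n\}: 2\le |S|\le n-2\}$, in which a subset $F\subseteq V_n$ is a face iff for all $S,T\in F$ one has $S\subseteq T$, $T\subseteq S$, or $S\cap T=\emptyset$. (So $\Delta_3=\{\emptyset\}$.) The link of a face $F$ in $\Delta$ is $\{G: F\cap G=\emptyset, F\cup G\in\Delta\}$. For complexes $\Delta,\Gamma$ on disjoint vertex sets, the join is $\Delta*\Gamma=\{F\cup G: F\in\Delta, G\in\Gamma\}$ (taking disjoint copies of vertex sets when needed). *)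

(* Defs.v *)
From mathcomp Require Import all_boot all_order.
Set Implicit Arguments. Unset Strict Implicit. Unset Printing Implicit Defensive.

(* {2,...,n} is realised inside 'I_n.+1 = {0,...,n} as the elements i >= 2. *)
Definition ground (n : nat) : {set 'I_n.+1} := [set i : 'I_n.+1 | 2 <= i].

Definition wh_vertex (n : nat) (S : {set 'I_n.+1}) : bool :=
  (S \subset ground n) && (2 <= #|S| <= n - 2).

Definition whitehouse (n : nat) : {set {set {set 'I_n.+1}}} :=
  [set F : {set {set 'I_n.+1}} |
     [forall S in F, wh_vertex S] &&
     [forall S in F, forall T in F,
        [|| S \subset T, T \subset S | [disjoint S & T]]]].

Definition link (V : finType) (K : {set {set V}}) (F : {set V}) : {set {set V}} :=
  [set G : {set V} | [disjoint F & G] && (F :|: G \in K)].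

Definition join (V1 V2 : finType) (K : {set {set V1}}) (L : {set {set V2}})
  : {set {set (V1 + V2)}} :=
  [set ((@inl V1 V2) @: (F : {set V1})) :|: ((@inr V1 V2) @: (G : {set V2})) | F in K, G in L].

Definition cverts (V : finType) (K : {set {set V}}) : {set V} :=
  \bigcup_(F in K) F.

Definition sc_iso (V1 V2 : finType) (K : {set {set V1}}) (L : {set {set V2}}) : Prop :=
  exists f : V1 -> V2,
    {in cverts K &, injective f} /\ L = [set f @: (F : {set V1}) | F in K].

(* Main.v *)
Require Import Defs.
From mathcomp Require Import all_boot all_order.
From mathcomp Require Import zify.
Set Implicit Arguments. Unset Strict Implicit. Unset Printing Implicit Defensive.

Lemma disjP (X : finType) (A B : {set X}) :
  reflect (forall x, x \in A -> x \in B -> False) [disjoint A & B].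
Proof.
rewrite disjoint_subset; apply: (iffP subsetP) => h x xA.
- by move=> xB; have := h x xA; rewrite inE xB.
- by rewrite inE; apply/negP; exact: h.
Qed.

Definition compat (X : finType) (S S' : {set X}) : bool :=
  [|| S \subset S', S' \subset S | [disjoint S & S']].

Definition Lam (X : finType) (V : pred {set X}) : {set {set {set X}}} :=
  [set F : {set {set X}} | [forall S in F, V S] &&
     [forall S in F, forall T in F, [|| S \subset T, T \subset S | [disjoint S & T]]]].

Lemma whitehouseE n : whitehouse n = Lam (@wh_vertex n).
Proof. by []. Qed.

Lemma LamP (X : finType) (V : pred {set X}) (F : {set {set X}}) :
  reflect ((forall S, S \in F -> V S) /\ (forall S S', S \in F -> S' \in F -> compat S S'))
          (F \in Lam V).
Proof.
rewrite inE; apply: (iffP andP) => [[/forall_inP H1 /forall_inP H2]|[H1 H2]]; split.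
- exact: H1.
- by move=> S S' /H2 /forall_inP; apply.
- by apply/forall_inP.
- by apply/forall_inP => S HS; apply/forall_inP => S' HS'; exact: H2.
Qed.

Lemma compatC X (S S' : {set X}) : compat S S' = compat S' S.
Proof.
by rewrite /compat disjoint_sym; case: (S \subset S'); case: (S' \subset S).
Qed.

Section Transfer.
Variables (X Y : finType) (VX : pred {set X}) (VY : pred {set Y}) (phi : {set X} -> {set Y}).
Hypothesis Hb : forall S, VX S -> VY (phi S).
Hypothesis Hc : forall U, VY U -> exists2 S, VX S & phi S = U.
Hypothesis Hd : forall S S', VX S -> VX S' -> compat (phi S) (phi S') = compat S S'.

Lemma transfer_fw G : G \in Lam VX -> phi @: G \in Lam VY.
Proof.
move=> /LamP [H1 H2]; apply/LamP; split.
- by move=> _ /imsetP [S HS ->]; apply: Hb; apply: H1.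
- move=> _ _ /imsetP [S HS ->] /imsetP [S' HS' ->]; rewrite Hd ?H1 //; exact: H2.
Qed.

Lemma transfer_bw H : H \in Lam VY -> exists2 G, G \in Lam VX & phi @: G = H.
Proof.
move=> /LamP [H1 H2].
exists [set S | VX S && (phi S \in H)].
- apply/LamP; split.
  + by move=> S; rewrite inE => /andP [].
  + move=> S S'; rewrite !inE => /andP [VS PS] /andP [VS' PS']; rewrite -Hd //; exact: H2.
- apply/setP => U; apply/idP/idP => [/imsetP [S] | HU].
  + by rewrite inE => /andP [_ PS] ->.
  + have [S VS PSU] := Hc (H1 _ HU); apply/imsetP; exists S => //.
    by rewrite inE VS PSU HU.
Qed.
End Transfer.

Lemma inj_imset_subset (X Y : finType) (g : X -> Y) (A S S' : {set X}) :
  {in A &, injective g} -> S \subset A -> S' \subset A ->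
  (g @: S \subset g @: S') = (S \subset S').
Proof.
move=> gi sA sA'; apply/idP/idP; last exact: imsetS.
move=> /subsetP h; apply/subsetP => x xS.
have /imsetP [x' x'S' e] := h _ (imset_f g xS).
by rewrite (gi _ _ (subsetP sA _ xS) (subsetP sA' _ x'S') e).
Qed.

Lemma inj_imset_disjoint (X Y : finType) (g : X -> Y) (A S S' : {set X}) :
  {in A &, injective g} -> S \subset A -> S' \subset A ->
  [disjoint g @: S & g @: S'] = [disjoint S & S'].
Proof.
move=> gi sA sA'; apply/idP/idP.
- move/disjP => h; apply/disjP => x xS xS'; exact: (h _ (imset_f g xS) (imset_f g xS')).
- move/disjP => h; apply/disjP => _ /imsetP [x xS ->] /imsetP [x' xS' e].
  apply: (h x xS); by rewrite (gi _ _ (subsetP sA _ xS) (subsetP sA' _ xS') e).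
Qed.

Lemma inj_imset_compat (X Y : finType) (g : X -> Y) (A S S' : {set X}) :
  {in A &, injective g} -> S \subset A -> S' \subset A ->
  compat (g @: S) (g @: S') = compat S S'.
Proof.
move=> gi sA sA'; rewrite /compat (inj_imset_disjoint gi sA sA').
by rewrite (inj_imset_subset gi sA sA') (inj_imset_subset gi sA' sA).
Qed.

Lemma inj_imset_eq (X Y : finType) (g : X -> Y) (A S S' : {set X}) :
  {in A &, injective g} -> S \subset A -> S' \subset A ->
  g @: S = g @: S' -> S = S'.
Proof.
move=> gi sA sA' e; apply/eqP; rewrite eqEsubset.
by rewrite -(inj_imset_subset gi sA sA') -(inj_imset_subset gi sA' sA) e subxx.
Qed.

Lemma imset_preim (X Y : finType) (g : X -> Y) (A : {set X}) (U : {set Y}) :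
  U \subset g @: A -> g @: (A :&: g @^-1: U) = U.
Proof.
move=> /subsetP sU; apply/setP => y; apply/idP/idP => [/imsetP [x] | yU].
- by rewrite !inE => /andP [_ ?] ->.
- have /imsetP [x xA e] := sU _ yU; apply/imsetP; exists x => //.
  by rewrite !inE xA -e yU.
Qed.

Lemma exists_bij (X : finType) (m : nat) (A : {set X}) (B : {set 'I_m.+1}) :
  #|A| = #|B| -> exists g : X -> 'I_m.+1, {in A &, injective g} /\ g @: A = B.
Proof.
move=> cAB.
pose g x := nth ord0 (enum B) (index x (enum A)).
have ltA x : x \in A -> index x (enum A) < size (enum B).
  by move=> xA; rewrite -cardE -cAB cardE index_mem mem_enum.
have gi : {in A &, injective g}.
  move=> x y xA yA; rewrite /g => /eqP; rewrite nth_uniq ?ltA ?enum_uniq // => /eqP e.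
  by rewrite -(nth_index x (s := enum A) (x := x)) ?mem_enum // e nth_index // mem_enum.
exists g; split => //; apply/eqP; rewrite eqEcard card_in_imset // cAB leqnn andbT.
by apply/subsetP => _ /imsetP [x xA ->]; rewrite -mem_enum mem_nth // ltA.
Qed.

Lemma card_ground m : #|ground m| = m - 1.
Proof.
case: m => [|m]; first by rewrite /ground -sum1_card big_mkcond big_ord_recl big_ord0 /= inE.
rewrite /ground -sum1_card big_mkcond /= 2!big_ord_recl /=.
rewrite (eq_bigr (fun _ => 1)); first by rewrite !inE /= big_const_ord iter_addn_0 mul1n; lia.
by move=> i _; rewrite inE.
Qed.

Definition cs (X : finType) (A : {set X}) := #|A|.
Lemma csE (X : finType) (A : {set X}) : #|A| = cs A. Proof. by []. Qed.

Section Main.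
Variables (n : nat) (T : {set 'I_n.+1}).
Hypotheses (n4 : 4 <= n) (vT : wh_vertex T).
Variable t0 : 'I_n.+1.
Hypothesis t0T : t0 \in T.
Definition X' := t0 |: (ground n :\: T).
Variable k : nat.
Hypothesis kE : #|T| = k.
Ltac cardlia :=
  intros; have kE' := kE;
  repeat match goal with
  | H : is_true (_ && _) |- _ =>
    let a := fresh "a" in let b := fresh "b" in case/andP: H => a b
  end;
  repeat match goal with |- is_true (_ && _) => apply/andP; split end;
  repeat match goal with H : context [card _] |- _ => rewrite !csE in H end;
  rewrite ?csE;
  repeat match goal with H : context [reverse_coercion] |- _ =>
    progress (unfold reverse_coercion in H) end;
  try unfold reverse_coercion;
  lia.

Variables (g1 : 'I_n.+1 -> 'I_(k + 1).+1) (g2 : 'I_n.+1 -> 'I_(n - k + 1).+1).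
Hypotheses (g1i : {in T &, injective g1}) (g1im : g1 @: T = ground (k + 1)).
Hypotheses (g2i : {in X' &, injective g2}) (g2im : g2 @: X' = ground (n - k + 1)).

Implicit Types U S : {set 'I_n.+1}.

Lemma TG : T \subset ground n. Proof. by case/andP: vT. Qed.
Lemma kb : 2 <= k <= n - 2. Proof. by rewrite -kE; case/andP: vT. Qed.

Definition psi (U : {set 'I_n.+1}) : {set 'I_n.+1} :=
  [set x | if x \in T then t0 \in U else x \in U].

Definition D2 (S : {set 'I_n.+1}) := (S \subset ground n) && ([disjoint S & T] || (T \subset S)).

Lemma t0X : t0 \in X'. Proof. by rewrite !inE eqxx. Qed.

Lemma memD2 S : D2 S -> S = psi (S :&: X').
Proof.
case/andP => /subsetP sG dT; apply/setP => x; rewrite !inE.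
case xT: (x \in T).
- rewrite eqxx /= andbT; case/orP: dT => [/disjP dj | /subsetP ts].
  + apply/idP/idP => [xS|t0S]; [case: (dj _ xS xT) | case: (dj _ t0S t0T)].
  + by rewrite !ts.
- have -> : (x == t0) = false by apply/negbTE; apply: contraFN xT => /eqP ->.
  case xS: (x \in S) => //=; by have := sG _ xS; rewrite inE.
Qed.

Lemma psiS U (U' : {set 'I_n.+1}) : U \subset U' -> psi U \subset psi U'.
Proof.
move=> /subsetP s; apply/subsetP => x; rewrite !inE; case: (x \in T); exact: s.
Qed.

Lemma psiD U (U' : {set 'I_n.+1}) : [disjoint U & U'] -> [disjoint psi U & psi U'].
Proof.
move=> /disjP d; apply/disjP => x; rewrite !inE; case: (x \in T); exact: d.
Qed.

Lemma D2_compat S (S' : {set 'I_n.+1}) : D2 S -> D2 S' -> compat (S :&: X') (S' :&: X') = compat S S'.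
Proof.
move=> dS dS'.
have E1 A B : D2 A -> D2 B -> (A :&: X' \subset B :&: X') = (A \subset B).
  move=> dA dB; apply/idP/idP; last exact: setSI.
  by move/psiS; rewrite -!memD2.
have E2 : [disjoint S :&: X' & S' :&: X'] = [disjoint S & S'].
  apply/idP/idP.
  - by move/psiD; rewrite -!memD2.
  - move=> d; apply: (disjointWl (subsetIl _ _)); rewrite disjoint_sym.
    apply: (disjointWl (subsetIl _ _)); by rewrite disjoint_sym.
by rewrite /compat E2 !E1.
Qed.

Lemma psiK U : U \subset X' -> psi U :&: X' = U.
Proof.
move=> /subsetP sU; apply/setP => x; rewrite in_setI [x \in psi U]inE.
case xX: (x \in X'); last first.
  by rewrite andbF; apply/esym/negbTE/negP => /sU; rewrite xX.
rewrite andbT; move: xX; rewrite !inE; case/orP => [/eqP -> | /andP [xT _]]; first by rewrite t0T.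
by rewrite (negbTE xT).
Qed.

Lemma psiG U : U \subset X' -> psi U \subset ground n.
Proof.
move=> /subsetP sU; apply/subsetP => x; rewrite inE; case xT: (x \in T).
  by move=> _; exact: (subsetP TG).
move/sU; rewrite !inE => /orP [/eqP e | /andP [_ ->]] //.
by move: xT; rewrite e t0T.
Qed.

Lemma psiD2 U : U \subset X' -> D2 (psi U).
Proof.
move=> sU; rewrite /D2 psiG //=; case t0U: (t0 \in U).
- by apply/orP; right; apply/subsetP => x xT; rewrite inE xT.
- by apply/orP; left; apply/disjP => x; rewrite inE => h xT; move: h; rewrite xT t0U.
Qed.

Lemma card_sup S : S \subset ground n -> T \subset S -> #|S| = #|S :&: X'| + (k - 1).
Proof.
move=> sG sT; rewrite -(cardsID X' S).
have -> : S :\: X' = T :\ t0.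
  apply/setP => x; rewrite !inE negb_or.
  case xT: (x \in T); rewrite ?(subsetP sT _ xT) /=.
  - by rewrite !andbT.
  - rewrite andbF; case xS: (x \in S); rewrite ?andbF //.
    by have := subsetP sG _ xS; rewrite inE => -> /=; rewrite andbF.
by rewrite -kE (cardsD1 t0 T) t0T add1n subn1.
Qed.

Lemma disj_X S : S \subset ground n -> [disjoint S & T] -> S :&: X' = S.
Proof.
move=> sG /disjP d; apply/setIidPl/subsetP => x xS; have := subsetP sG _ xS.
rewrite !inE => ->; rewrite andbT.
by apply/orP; right; apply/negP => xT; exact: d _ xS xT.
Qed.

Lemma card_gmT : #|ground n :\: T| = n - 1 - k.
Proof. by rewrite -kE cardsD card_ground (setIidPr TG). Qed.

Lemma card_X : #|X'| = n - k.
Proof.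
have := kb; rewrite /X' cardsU1 card_gmT !inE t0T /=; cardlia.
Qed.

Definition VX1 (S : {set 'I_n.+1}) := [&& S \subset T, S != T & wh_vertex S].
Definition VX2 (S : {set 'I_n.+1}) := [&& wh_vertex S, S != T, compat S T & ~~ (S \subset T)].

Definition fa (S : {set 'I_n.+1}) := g1 @: S.
Definition fb (S : {set 'I_n.+1}) := g2 @: (S :&: X').

Lemma VX2_D2 S : VX2 S -> D2 S.
Proof.
case/and4P => /andP [sG _] _ c nsT; rewrite /D2 sG /=.
by move: c; rewrite /compat (negbTE nsT) /= orbC.
Qed.

Lemma b1 S : VX1 S -> wh_vertex (fa S).
Proof.
case/and3P => sT nT /andP [_ cS].
have lt : #|S| < #|T| by apply: proper_card; rewrite properEneq nT.
rewrite /wh_vertex /fa -g1im imsetS //= card_in_imset; last exact: (sub_in2 (subsetP sT) g1i).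
have := kb; cardlia.
Qed.

Lemma c1 (U : {set 'I_(k + 1).+1}) : wh_vertex U -> exists2 S, VX1 S & fa S = U.
Proof.
case/andP => sU cU; rewrite -g1im in sU.
have e := imset_preim sU.
set S0 := T :&: g1 @^-1: U in e *.
have sS0 : S0 \subset T by exact: subsetIl.
have cS : #|S0| = #|U|.
  rewrite -[in RHS]e card_in_imset //; apply: (sub_in2 _ g1i) => x; rewrite inE => /andP [] //.
have kb' := kb.
have ne : S0 != T by apply/eqP => eT; move: cS; rewrite eT => cS; cardlia.
exists S0 => //.
rewrite /VX1 sS0 ne /wh_vertex (subset_trans sS0 TG) /=.
rewrite cS; cardlia.
Qed.

Lemma d1 S (S' : {set 'I_n.+1}) : VX1 S -> VX1 S' -> compat (fa S) (fa S') = compat S S'.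
Proof. by case/and3P => sS _ _ /and3P [sS' _ _]; exact: inj_imset_compat g1i sS sS'. Qed.

Lemma b2 S : VX2 S -> wh_vertex (fb S).
Proof.
move=> vS; have /andP [sG dT] := VX2_D2 vS.
case/and4P: vS => /andP [_ cS] nT _ nsT.
rewrite /wh_vertex /fb -g2im imsetS ?subsetIr //= card_in_imset; last first.
  by apply: (sub_in2 _ g2i) => x; rewrite inE => /andP [].
have := kb; case/orP: dT => [dj | sT].
- rewrite disj_X //.
  have : #|S| <= #|ground n :\: T|.
    apply: subset_leq_card; apply/subsetP => x xS; rewrite inE (subsetP sG _ xS) andbT.
    by apply/negP => xT; move/disjP: dj; apply; eauto.
  rewrite card_gmT => h1 h2; cardlia.
- have lt : #|T| < #|S| by apply: proper_card; rewrite properEneq sT eq_sym nT.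
  rewrite (card_sup sG sT) in cS lt => h; cardlia.
Qed.

Lemma c2 (U : {set 'I_(n - k + 1).+1}) : wh_vertex U -> exists2 S, VX2 S & fb S = U.
Proof.
case/andP => sU cU; rewrite -g2im in sU.
have e := imset_preim sU.
set U' := X' :&: g2 @^-1: U in e.
have sU' : U' \subset X' by exact: subsetIl.
have cS : #|U'| = #|U|.
  rewrite -[in RHS]e card_in_imset //; apply: (sub_in2 _ g2i) => x; rewrite inE => /andP [] //.
exists (psi U'); last by rewrite /fb psiK.
have dS := psiD2 sU'; have /andP [sG dT] := dS.
have kb' := kb.
have cT : compat (psi U') T by rewrite /compat; case/orP: dT => ->; rewrite ?orbT.
rewrite /VX2 /wh_vertex.
case/orP: dT => [dj | sT].
- have cP : #|psi U'| = #|U| by rewrite -cS -[in RHS](psiK sU') disj_X.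
  move/disjP: (dj) => dj'.
  have ne : psi U' != T.
    apply/eqP => eT.
    have T0 : T = set0.
      by apply/setP => x; rewrite [in RHS]inE; apply/negP => xT; apply: (dj' x); rewrite ?eT.
    by move: kb'; rewrite -kE T0 cards0.
  apply/and4P; split => //.
  + rewrite sG cP /=; cardlia.
  + apply/negP => sT.
    have S0 : psi U' = set0.
      by apply/setP => x; rewrite [in RHS]inE; apply/negP => xS; exact: (dj' x xS (subsetP sT x xS)).
    by move: cP cU; rewrite S0 cards0 => <-.
- have cP := card_sup sG sT; rewrite psiK // cS in cP.
  have ne : psi U' != T by apply/eqP => eT; move: cP; rewrite eT kE => ?; cardlia.
  apply/and4P; split => //.
  + rewrite sG cP /=; cardlia.
  + by apply/negP => sT'; move/eqP: ne; apply; apply/eqP; rewrite eqEsubset sT' sT.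
Qed.

Lemma d2 S (S' : {set 'I_n.+1}) : VX2 S -> VX2 S' -> compat (fb S) (fb S') = compat S S'.
Proof.
move=> /VX2_D2 dS /VX2_D2 dS'; rewrite /fb (inj_imset_compat g2i) ?subsetIr //.
exact: D2_compat.
Qed.

Definition f S : ({set 'I_(k + 1).+1} + {set 'I_(n - k + 1).+1})%type :=
  if S \subset T then inl (fa S) else inr (fb S).

Definition KK := link (whitehouse n) [set T].

Lemma K1 G : G \in KK ->
  [set S in G | S \subset T] \in Lam VX1 /\ [set S in G | ~~ (S \subset T)] \in Lam VX2.
Proof.
rewrite inE => /andP [dj W]; rewrite disjoints1 in dj.
rewrite whitehouseE in W; move/LamP: W => [H1 H2].
have inG S : S \in G -> S \in [set T] :|: G by move=> h; rewrite in_setU h orbT.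
have TG' : T \in [set T] :|: G by rewrite in_setU set11.
have vS S : S \in G -> wh_vertex S by move=> h; exact: H1 _ (inG _ h).
have cST S : S \in G -> compat S T by move=> h; exact: H2 _ _ (inG _ h) TG'.
have nT S : S \in G -> S != T by move=> h; apply/eqP => e; move: dj; rewrite -e h.
split; apply/LamP; split.
- by move=> S; rewrite inE => /andP [h sT]; rewrite /VX1 sT nT // vS.
- by move=> S S'; rewrite !inE => /andP [h _] /andP [h' _]; exact: H2 (inG _ h) (inG _ h').
- by move=> S; rewrite inE => /andP [h nsT]; rewrite /VX2 vS // nT // cST // nsT.
- by move=> S S'; rewrite !inE => /andP [h _] /andP [h' _]; exact: H2 (inG _ h) (inG _ h').
Qed.

Lemma K2 G1 G2 : G1 \in Lam VX1 -> G2 \in Lam VX2 -> G1 :|: G2 \in KK.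
Proof.
move=> /LamP [A1 A2] /LamP [B1 B2]; rewrite inE; apply/andP; split.
  rewrite disjoints1 in_setU; apply/norP; split; apply/negP => h.
  - by have := A1 _ h; rewrite /VX1 eqxx /= andbF.
  - by have := B1 _ h; rewrite /VX2 eqxx /= andbF.
rewrite whitehouseE; apply/LamP; split.
  move=> S; rewrite !in_setU in_set1 => /orP [/eqP -> // | /orP [h | h]].
  - by case/and3P: (A1 _ h).
  - by case/and4P: (B1 _ h).
have c1T S : S \in G1 -> compat S T by move=> h; case/and3P: (A1 _ h) => sT _ _; rewrite /compat sT.
have c2T S : S \in G2 -> compat S T by move=> h; case/and4P: (B1 _ h).
have c12 S S' : S \in G1 -> S' \in G2 -> compat S S'.
  move=> h h'; case/and3P: (A1 _ h) => sT _ _.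
  case/andP: (VX2_D2 (B1 _ h')) => _ /orP [dj | sT'].
  - have d : [disjoint S & S'] by apply: (disjointWl sT); rewrite disjoint_sym.
    by rewrite /compat d !orbT.
  - by rewrite /compat (subset_trans sT sT').
move=> S S'; rewrite !in_setU !in_set1 => /orP [/eqP -> | /orP [h|h]] /orP [/eqP -> | /orP [h'|h']].
- by rewrite /compat subxx.
- by rewrite compatC c1T.
- by rewrite compatC c2T.
- exact: c1T.
- exact: A2.
- exact: c12.
- exact: c2T.
- by rewrite compatC c12.
- exact: B2.
Qed.

Lemma Fsplit G1 G2 : G1 \in Lam VX1 -> G2 \in Lam VX2 ->
  f @: (G1 :|: G2) = inl @: (fa @: G1) :|: inr @: (fb @: G2).
Proof.
move=> /LamP [A1 _] /LamP [B1 _]; rewrite imsetU -!imset_comp.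
congr (_ :|: _); apply: eq_in_imset => S h /=; rewrite /f.
- by case/and3P: (A1 _ h) => ->.
- by case/and4P: (B1 _ h) => _ _ _ /negbTE ->.
Qed.

Lemma vert G S : G \in KK -> S \in G ->
  (S \subset T -> VX1 S) /\ (~~ (S \subset T) -> VX2 S).
Proof.
move=> hG hS; have [/LamP [A1 _] /LamP [B1 _]] := K1 hG.
by split => h; [apply: A1 | apply: B1]; rewrite inE hS h.
Qed.

Lemma finj : {in cverts KK &, injective f}.
Proof.
move=> S S' /bigcupP [G hG hS] /bigcupP [G' hG' hS'].
have [v1 v2] := vert hG hS; have [v1' v2'] := vert hG' hS'.
rewrite /f; case sT: (S \subset T); case sT': (S' \subset T); try discriminate.
- by case=> e; exact: inj_imset_eq g1i sT sT' e.
- case=> e; have e' := inj_imset_eq g2i (subsetIr _ _) (subsetIr _ _) e.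
  rewrite (memD2 (VX2_D2 (v2 (negbT sT)))) (memD2 (VX2_D2 (v2' (negbT sT')))).
  by rewrite e'.
Qed.

Lemma main_iso : sc_iso KK (join (whitehouse (k + 1)) (whitehouse (n - k + 1))).
Proof.
exists f; split; first exact: finj.
apply/setP => H; apply/idP/idP.
- move/imset2P => [A B HA HB ->].
  have [G1 hG1 e1] := transfer_bw c1 d1 HA.
  have [G2 hG2 e2] := transfer_bw c2 d2 HB.
  apply/imsetP; exists (G1 :|: G2); first exact: K2.
  by rewrite Fsplit // e1 e2.
- move/imsetP => [G hG ->]; have [h1 h2] := K1 hG.
  have eG : G = [set S in G | S \subset T] :|: [set S in G | ~~ (S \subset T)].
    by apply/setP => S; rewrite !inE; case: (S \in G); case: (S \subset T).
  rewrite eG Fsplit //; apply: imset2_f; rewrite whitehouseE.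
  - exact: (transfer_fw b1 d1 h1).
  - exact: (transfer_fw b2 d2 h2).
Qed.

End Main.


Theorem mainTheorem2 (n : nat) (T : {set 'I_n.+1}) :
  4 <= n -> wh_vertex T ->
  sc_iso (link (whitehouse n) [set T])
         (join (whitehouse (#|T| + 1)) (whitehouse (n - #|T| + 1))).
Proof.
move=> n4 vT.
have /andP [_ /andP [k2 _]] := vT.
have : 0 < #|T| by apply: leq_trans k2.
rewrite card_gt0 => /set0Pn [t0 t0T].
have [g1 [g1i g1im]] := exists_bij (B := ground (#|T| + 1)) (esym (etrans (card_ground _) (addnK 1 _))).
have cX := card_X n4 vT t0T (erefl #|T|).
have [g2 [g2i g2im]] : exists g : 'I_n.+1 -> 'I_(n - #|T| + 1).+1,
    {in X' T t0 &, injective g} /\ g @: X' T t0 = ground (n - #|T| + 1).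
  by apply: exists_bij; rewrite cX card_ground addnK.
exact: (main_iso n4 vT t0T (erefl #|T|) g1i g1im g2i g2im).
Qed.
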